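(* Let $G=(V,E)$ be a $k$-uniform linear hypergraph with an edge correspondence $\sigma$ and weighted lists of colours $(L,\mu)$ assigned to its edges, where every list $L(e)$ is finite. Let $\ell,n>0$ be such that, for all $e\in E$: (i) $\ell/n\ge 3ek$ (here $e$ in $3ek$ denotes Euler's number); (ii) $|L(e)|_\mu\ge\ell$; (iii) $|N_{G,L,\sigma}(e,v,c)|_\mu\le n$ for all $v\in e$ and $c\in L(e)$. Then $G$ has an $(L,\sigma)$-colouring.
   Context: A hypergraph is $k$-uniform if every edge has exactly $k$ vertices, and linear if any two distinct edges share at most one vertex; distinct edges sharing a vertex are adjacent. Colours are positive integers. A weighted list assignment $(L,\mu)$ gives each edge $e$ a list $L(e)\subseteq\mathbb{N}$ and weights $\mu(e)\colon L(e)\to(0,1]$, written $\mu(e,c)$; for $A\subseteq E\times\mathbb{N}$, $|A|_\mu=\sum_{(e,c)\in A}\mu(e,c)$ and $|L(e)|_\mu=\sum_{c\in L(e)}\mu(e,c)$. An edge correspondence $\sigma$ consists of permutations $\sigma_{e,f}$ of $\mathbb{N}$ for all adjacent edges $e,f$ with $\sigma_{e,f}=\sigma_{f,e}^{-1}$; $(e,c)$ blocks $(f,c')$ if $\sigma_{e,f}(c)=c'$. An $(L,\sigma)$-colouring is $\gamma\colon E\to\mathbb{N}$ with $\gamma(e)\in L(e)$ such that $(e,\gamma(e))$ does not block $(f,\gamma(f))$ for all adjacent $e,f$. $N_{G,L,\sigma}(e,v,c)$ is the set of pairs $(f,c')$ with $v\in f$, $f\ne e$, $c'\in L(f)$ and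 $(f,c')$ blocking $(e,c)$. *)

(* Defs.v *)
From HB Require Import structures.
From mathcomp Require Import all_boot all_order all_algebra.
From mathcomp Require Import reals.
From mathcomp Require Import sequences exp.
Set Implicit Arguments. Unset Strict Implicit. Unset Printing Implicit Defensive.
Import Order.TTheory GRing.Theory Num.Theory.
Local Open Scope ring_scope.

Section Hyper.
Variable V : finType.

Definition uniform (k : nat) (E : {set {set V}}) : Prop :=
  forall e, e \in E -> #|e| = k.

Definition linear_hg (E : {set {set V}}) : Prop :=
  forall e f, e \in E -> f \in E -> e != f -> (#|e :&: f| <= 1)%N.

Definition adjacent (e f : {set V}) : bool := (e != f) && (e :&: f != set0).

Definition edge_correspondence (E : {set {set V}})
  (sigma : {set V} -> {set V} -> nat -> nat) : Prop :=
  forall e f, e \in E -> f \in E -> adjacent e f ->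
    cancel (sigma e f) (sigma f e).

Definition blocks (sigma : {set V} -> {set V} -> nat -> nat)
  (e : {set V}) (c : nat) (f : {set V}) (c' : nat) : bool :=
  sigma e f c == c'.

Definition Lsigma_colouring (E : {set {set V}}) (L : {set V} -> seq nat)
  (sigma : {set V} -> {set V} -> nat -> nat) (gamma : {set V} -> nat) : Prop :=
  (forall e, e \in E -> gamma e \in L e) /\
  (forall e f, e \in E -> f \in E -> adjacent e f ->
     ~~ blocks sigma e (gamma e) f (gamma f)).

(* weighted size of a list: |L(e)|_mu (lists are duplicate-free) *)
Definition list_weight (R : numDomainType) (L : {set V} -> seq nat)
  (mu : {set V} -> nat -> R) (e : {set V}) : R :=
  \sum_(c <- L e) mu e c.

Definition nbhd_weight (R : numDomainType) (E : {set {set V}})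
  (L : {set V} -> seq nat) (mu : {set V} -> nat -> R)
  (sigma : {set V} -> {set V} -> nat -> nat)
  (e : {set V}) (v : V) (c : nat) : R :=
  \sum_(f in E | (v \in f) && (f != e))
     \sum_(c' <- L f | blocks sigma f c' e c) mu f c'.

End Hyper.

(* Main.v *)
Require Import Defs.
From HB Require Import structures.
From mathcomp Require Import all_boot all_order all_algebra.
From mathcomp Require Import reals.
From mathcomp Require Import sequences exp.
From Stdlib Require Import FunctionalExtensionality.
From mathcomp Require Import ring lra.
Import Order.TTheory GRing.Theory Num.Theory.
Local Open Scope ring_scope.
Set Implicit Arguments. Unset Strict Implicit. Unset Printing Implicit Defensive.

Section Count.
Variables (R : realFieldType) (V : finType) (E : {set {set V}}) (k : nat)
  (sigma : {set V} -> {set V} -> nat -> nat)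
  (L : {set V} -> seq nat) (mu : {set V} -> nat -> R).
Hypothesis mu_ge0 : forall e c, 0 <= mu e c.
Hypothesis Hsig : edge_correspondence E sigma.

Definition upd (g : {set V} -> nat) x c := fun e => if e == x then c else g e.

Fixpoint AS (s : seq {set V}) : seq ({set V} -> nat) :=
  match s with
  | [::] => [:: fun _ => 0%N]
  | x :: s' => flatten [seq [seq upd g x c | c <- L x] | g <- AS s']
  end.

Definition W s g := \prod_(e <- s) mu e (g e).
Definition proper s (g : {set V} -> nat) : bool :=
  all (fun e => all (fun f => Defs.adjacent e f ==> ~~ blocks sigma e (g e) f (g f)) s) s.
Definition C s := \sum_(g <- AS s) W s g * (proper s g)%:R.

Lemma sum_AS_cons x s (F : _ -> R) :
  \sum_(g <- AS (x :: s)) F g = \sum_(g <- AS s) \sum_(c <- L x) F (upd g x c).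
Proof. by rewrite /= big_flatten big_map; apply eq_bigr => g _; rewrite big_map. Qed.

Lemma upd_comm g x y c d : x != y -> upd (upd g x c) y d = upd (upd g y d) x c.
Proof.
move=> nxy; apply: functional_extensionality => e; rewrite /upd.
case: (eqVneq e y) => [->|//]; by rewrite eq_sym (negbTE nxy).
Qed.

Lemma sum_AS_rem s x (F : _ -> R) : uniq s -> x \in s ->
  \sum_(g <- AS s) F g = \sum_(g <- AS (rem x s)) \sum_(c <- L x) F (upd g x c).
Proof.
elim: s F => [//|y s IH] F /= /andP[ys us]; rewrite in_cons.
case: (eqVneq y x) => [->|nyx] /= xs; first by rewrite sum_AS_cons.
rewrite sum_AS_cons (IH _ us xs) sum_AS_cons.
apply eq_bigr => g _; rewrite exchange_big; apply eq_bigr => c _; apply eq_bigr => d _.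
by rewrite upd_comm // eq_sym.
Qed.

Lemma W_upd s x g c : uniq s -> x \in s -> W s (upd g x c) = mu x c * W (rem x s) g.
Proof.
move=> us xs; rewrite /W (perm_big _ (perm_to_rem xs)) big_cons /upd eqxx; congr (_ * _).
apply: eq_big_seq => e; rewrite mem_rem_uniq // => /andP[ne _] /=; by rewrite (negbTE ne).
Qed.

Lemma W_ge0 s g : 0 <= W s g.
Proof. by apply: prodr_ge0 => e _. Qed.

Lemma proper_upd_le s x g c : uniq s -> x \in s -> proper s (upd g x c) -> proper (rem x s) g.
Proof.
move=> us xs /allP H; apply/allP => e; rewrite mem_rem_uniq // => /andP[ne es].
have /allP H2 := H e es; apply/allP => f; rewrite mem_rem_uniq // => /andP[nf fs].
by have := H2 f fs; rewrite /upd (negbTE ne) (negbTE nf).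
Qed.

Lemma adjacent_sym (e f : {set V}) : Defs.adjacent e f = Defs.adjacent f e.
Proof. by rewrite /Defs.adjacent eq_sym setIC. Qed.

Lemma adjacent_irr (e : {set V}) : Defs.adjacent e e = false.
Proof. by rewrite /Defs.adjacent eqxx. Qed.

Lemma proper_upd_ge s x g c : uniq s -> x \in s -> {subset s <= E} ->
  proper (rem x s) g -> ~~ has (fun f => Defs.adjacent x f && blocks sigma f (g f) x c) (rem x s) ->
  proper s (upd g x c).
Proof.
move=> us xs sE /allP Hp /hasPn Hh.
have key : forall f, f \in s -> f != x -> Defs.adjacent x f -> blocks sigma f (g f) x c = false.
  move=> f fs nf af; have := Hh f; rewrite mem_rem_uniq // inE nf fs af /= => /(_ isT).
  by move/negbTE.
apply/allP => e es; apply/allP => f fs; rewrite /upd.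
case: (eqVneq e x) => [->|ne]; case: (eqVneq f x) => [->|nf].
- by rewrite adjacent_irr.
- apply/implyP => af; apply/negP => /eqP bl.
  have := key f fs nf af; rewrite /blocks -bl.
  by rewrite (Hsig (sE x xs) (sE f fs) af) eqxx.
- by apply/implyP => af; rewrite key // adjacent_sym.
- have er : e \in rem x s by rewrite mem_rem_uniq // inE ne es.
  have fr : f \in rem x s by rewrite mem_rem_uniq // inE nf fs.
  by have /allP := Hp e er; move/(_ f fr).
Qed.

Lemma upd_eq g x c : upd g x c x = c.
Proof. by rewrite /upd eqxx. Qed.

Lemma C_upper s f (h : nat -> R) : uniq s -> f \in s -> (forall d, 0 <= h d) ->
  \sum_(g <- AS s) W s g * (proper s g)%:R * h (g f)
  <= C (rem f s) * \sum_(d <- L f) mu f d * h d.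
Proof.
move=> us fs h0; rewrite (sum_AS_rem _ us fs) /C big_distrl /=.
apply: ler_sum => g _; rewrite big_distrr /=; apply: ler_sum => d _.
rewrite W_upd // upd_eq.
case pu: (proper s (upd g f d)).
  rewrite (proper_upd_le us fs pu) /= !mulr1.
  by rewrite mulrA [mu f d * _]mulrC.

rewrite mulr0 mul0r; apply: mulr_ge0; last by apply: mulr_ge0.
by apply: mulr_ge0; [apply: W_ge0 | apply: ler0n].
Qed.

Lemma has_sum_ge1 (p : pred {set V}) r : has p r -> 1 <= \sum_(f <- r) (p f)%:R :> R.
Proof.
elim: r => [//|y r IH] /=; rewrite big_cons.
case py: (p y) => /=.
  by move=> _; rewrite lerDl; apply: sumr_ge0 => i _; apply: ler0n.
by rewrite add0r.
Qed.

Definition hb x f d := (Defs.adjacent x f)%:R * \sum_(c <- L x) mu x c * (blocks sigma f d x c)%:R.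

Lemma hb_ge0 x f d : 0 <= hb x f d.
Proof.
apply: mulr_ge0; first exact: ler0n.
by apply: sumr_ge0 => c _; apply: mulr_ge0; [exact: mu_ge0 | exact: ler0n].
Qed.

Lemma C_lower s x : uniq s -> x \in s -> {subset s <= E} ->
  (\sum_(c <- L x) mu x c) * C (rem x s)
  - \sum_(f <- rem x s) \sum_(g <- AS (rem x s)) W (rem x s) g * (proper (rem x s) g)%:R * hb x f (g f)
  <= C s.
Proof.
move=> us xs sE; set r := rem x s.
have eA : (\sum_(c <- L x) mu x c) * C r =
   \sum_(g <- AS r) \sum_(c <- L x) mu x c * W r g * (proper r g)%:R.
  rewrite /C big_distrr /=; apply: eq_bigr => g _; rewrite big_distrl /=.
  by apply: eq_bigr => c _; rewrite mulrA.
have eB : \sum_(f <- r) \sum_(g <- AS r) W r g * (proper r g)%:R * hb x f (g f) =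
   \sum_(g <- AS r) \sum_(c <- L x) mu x c * W r g * (proper r g)%:R *
      \sum_(f <- r) (Defs.adjacent x f && blocks sigma f (g f) x c)%:R.
  rewrite exchange_big /=; apply: eq_bigr => g _.
  rewrite /hb; under eq_bigr => f _ do rewrite big_distrr /= big_distrr /=.
  rewrite exchange_big /=; apply: eq_bigr => c _; rewrite big_distrr /=.
  apply: eq_bigr => f _; rewrite -mulnb natrM.
  by ring.
have eC : C s = \sum_(g <- AS r) \sum_(c <- L x) mu x c * W r g * (proper s (upd g x c))%:R.
  rewrite /C (sum_AS_rem _ us xs); apply: eq_bigr => g _; apply: eq_bigr => c _.
  by rewrite W_upd.
rewrite eA eB eC -sumrB; apply: ler_sum => g _; rewrite -sumrB; apply: ler_sum => c _.
have M0 : 0 <= mu x c * W r g by apply: mulr_ge0; [exact: mu_ge0 | exact: W_ge0].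
have S0 : 0 <= \sum_(f <- r) (Defs.adjacent x f && blocks sigma f (g f) x c)%:R :> R.
  by apply: sumr_ge0 => f _; exact: ler0n.
case pr: (proper r g); last by rewrite /= !mulr0 mul0r subrr mulr_ge0.
case hh: (has (fun f => Defs.adjacent x f && blocks sigma f (g f) x c) r).
  have h1 := has_sum_ge1 hh.
  apply: le_trans (_ : 0 <= _); last by apply: mulr_ge0 => //; exact: ler0n.
  rewrite /= mulr1 subr_le0 ler_peMr //.
have -> : proper s (upd g x c).
  by apply: (proper_upd_ge us xs sE); rewrite ?pr ?hh.
rewrite /= !mulr1 lerBlDr lerDl; exact: mulr_ge0.
Qed.

Variables (l n : R).
Hypothesis Hl : forall x, x \in E -> l <= \sum_(c <- L x) mu x c.
Hypothesis Hn : forall x v c, x \in E -> v \in x -> c \in L x ->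
  \sum_(f in E | (v \in f) && (f != x)) \sum_(c' <- L f | blocks sigma f c' x c) mu f c' <= n.
Hypothesis Hk : forall x, x \in E -> #|x| = k.
Hypothesis l0 : 0 < l.
Hypothesis n0 : 0 <= n.
Hypothesis Hlk : 4 * (k%:R * n) <= l.

Lemma inner_bound x c r : x \in E -> c \in L x -> uniq r -> {subset r <= E} ->
  \sum_(f <- r) (Defs.adjacent x f)%:R * \sum_(d <- L f | blocks sigma f d x c) mu f d
  <= k%:R * n.
Proof.
move=> xE cL ur rE.
have Q0 : forall f, 0 <= \sum_(d <- L f | blocks sigma f d x c) mu f d.
  by move=> f; apply: sumr_ge0 => d _; exact: mu_ge0.
apply: (@le_trans _ _ (\sum_(f <- r) \sum_(v in x)
   ((v \in f) && (f != x))%:R * \sum_(d <- L f | blocks sigma f d x c) mu f d)).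
  apply: ler_sum => f _.
  case af: (Defs.adjacent x f); last first.
    by rewrite mul0r; apply: sumr_ge0 => v _; apply: mulr_ge0 => //; exact: ler0n.
  move: (af); rewrite /Defs.adjacent => /andP[nxf /set0Pn[v]]; rewrite inE => /andP[vx vf].
  rewrite (bigD1 v) //= vf eq_sym nxf /= mul1r lerDl.
  by apply: sumr_ge0 => w _; apply: mulr_ge0 => //; exact: ler0n.
rewrite exchange_big /=.
apply: (@le_trans _ _ (\sum_(v in x) n)); last first.
  by rewrite sumr_const Hk // mulr_natl.
apply: ler_sum => v vx.
apply: le_trans (Hn xE vx cL).
have Hif : forall f : {set V}, ((v \in f) && (f != x))%:R * \sum_(d <- L f | blocks sigma f d x c) mu f d
   = if (v \in f) && (f != x) then \sum_(d <- L f | blocks sigma f d x c) mu f d else 0.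
  by move=> f; case: ifP => _; rewrite ?mul1r ?mul0r.
under eq_bigr => f _ do rewrite Hif.
rewrite (big_uniq _ ur) [X in _ <= X]big_mkcondr /=.
rewrite [X in _ <= X](bigID (fun f => f \in r)) /=.
have -> : \sum_(i in E | i \in r) (if (v \in i) && (i != x)
    then \sum_(c' <- L i | blocks sigma i c' x c) mu i c' else 0) =
  \sum_(i in r) (if (v \in i) && (i != x)
    then \sum_(c' <- L i | blocks sigma i c' x c) mu i c' else 0).
  by apply: eq_bigl => f /=; case fr: (f \in r); rewrite ?andbT ?andbF ?(rE f fr).
rewrite lerDl; apply: sumr_ge0 => f _; case: ifP => // _.
Qed.


Lemma Tsum x r : x \in E -> uniq r -> {subset r <= E} ->
  \sum_(f <- r) \sum_(d <- L f) mu f d * hb x f d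
  <= (\sum_(c <- L x) mu x c) * (k%:R * n).
Proof.
move=> xE ur rE.
have -> : \sum_(f <- r) \sum_(d <- L f) mu f d * hb x f d =
  \sum_(c <- L x) mu x c * \sum_(f <- r) (Defs.adjacent x f)%:R *
      \sum_(d <- L f | blocks sigma f d x c) mu f d.
  under [RHS]eq_bigr => c _ do rewrite big_distrr /=.
  rewrite [RHS]exchange_big /=; apply: eq_bigr => f _.
  rewrite /hb.
  under eq_bigr => d _ do rewrite mulrA big_distrr /=.
  under [RHS]eq_bigr => c _ do rewrite big_mkcond /= big_distrr /= big_distrr /=.
  rewrite [RHS]exchange_big /=; apply: eq_bigr => d _; apply: eq_bigr => c _.
  by case: (blocks sigma f d x c) => /=; ring.
rewrite big_distrl /= big_seq_cond [X in _ <= X]big_seq_cond.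
apply: ler_sum => c /andP[cL _]; apply: ler_wpM2l; first exact: mu_ge0.
exact: inner_bound.
Qed.


Lemma C_nil : C [::] = 1.
Proof. by rewrite /C /= big_seq1 /W big_nil mul1r. Qed.

Lemma main_ind m s : (size s <= m)%N -> uniq s -> {subset s <= E} ->
  0 < C s /\ (forall x, x \in s -> l / 2 * C (rem x s) <= C s).
Proof.
elim: m s => [|m IH] s.
  by case: s => // _ _ _; rewrite C_nil; split => //.
move=> hs us sE.
have step : forall x, x \in s -> 0 < C (rem x s) /\ l / 2 * C (rem x s) <= C s.
  move=> x xs; set r := rem x s.
  have hr : (size r <= m)%N by rewrite /r size_rem //; case: (size s) hs xs => //; case: s.
  have ur : uniq r := rem_uniq x us.
  have rE : {subset r <= E} by move=> f fr; apply: sE; exact: (mem_rem fr).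
  have [Cr0 IHr] := IH r hr ur rE.
  split => //.
  have xE := sE x xs.
  have low := C_lower us xs sE.
  set z := C r / l.
  have Crz : C r = l * z by rewrite /z mulrCA mulfV ?mulr1 // gt_eqF.
  have z0 : 0 <= z by rewrite /z divr_ge0 // ltW.
  have T0 : forall f, 0 <= \sum_(d <- L f) mu f d * hb x f d.
    by move=> f; apply: sumr_ge0 => d _; apply: mulr_ge0; [exact: mu_ge0|exact: hb_ge0].
  have up : \sum_(f <- r) \sum_(g <- AS r) W r g * (proper r g)%:R * hb x f (g f)
      <= (2 * z) * \sum_(f <- r) \sum_(d <- L f) mu f d * hb x f d.
    rewrite big_distrr /= big_seq [X in _ <= X]big_seq; apply: ler_sum => f fr.
    apply: le_trans (C_upper ur fr (hb_ge0 x f)) _.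
    apply: ler_wpM2r => //.
    have := IHr f fr; rewrite Crz => h; nra.
  have ts := Tsum xE ur rE.
  have Al := Hl xE.
  have K0 : 0 <= k%:R * n by apply: mulr_ge0 => //; exact: ler0n.
  move: low up ts Al K0 (Hlk); rewrite -/r Crz.
  set A := \sum_(c <- L x) mu x c.
  set B := \sum_(f <- r) _.
  set T := \sum_(f <- r) _.
  set K := k%:R * n.
  move=> low up ts Al K0 Hlk'.
  have h1 : 0 <= (A - l) * (z * (l - 2 * K)).
    by apply: mulr_ge0; [lra | apply: mulr_ge0 => //; lra].
  have h2 : 0 <= z * l * (l - 4 * K) by apply: mulr_ge0; [apply: mulr_ge0 => //; exact: ltW | lra].
  have h3 : 2 * z * T <= 2 * z * (A * K) by apply: ler_wpM2l => //; lra.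
  nra.
split; last by move=> x xs; case: (step x xs).
case: s hs us sE step => [|x s'] hs us sE step; first by rewrite C_nil.
have [h1 h2] := step x (mem_head x s').
apply: lt_le_trans h2; apply: mulr_gt0; [by rewrite divr_gt0 | exact: h1].
Qed.

End Count.
Section Extra.
Variables (V : finType) (L : {set V} -> seq nat).

Lemma all_flat T (a : pred T) (ss : seq (seq T)) : all a (flatten ss) = all (all a) ss.
Proof. by elim: ss => //= s ss IH; rewrite all_cat IH. Qed.

Lemma AS_prop s : all (fun g => all (fun e => g e \in L e) s) (AS L s).
Proof.
elim: s => //= x s IH; rewrite all_flat all_map.
apply: sub_all IH => g /= Hg; rewrite all_map; apply/allP => c cL /=.
rewrite /upd eqxx cL /=; apply/allP => e es /=.
by case: eqP => [->|_] //; move/allP: Hg => /(_ e es).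
Qed.

Lemma sum_pos_ex (R : numDomainType) T (t : seq T) (P : pred T) (F : T -> R) :
  all P t -> 0 < \sum_(g <- t) F g -> exists2 g, P g & F g != 0.
Proof.
elim: t => [|y t IH] /=; first by rewrite big_nil ltxx.
move=> /andP[Py Pt]; rewrite big_cons.
case: (eqVneq (F y) 0) => [->|ne]; last by move=> _; exists y.
by rewrite add0r; apply: IH.
Qed.
End Extra.

Unset Implicit Arguments.

Theorem lemma2p1 (R : realType) (V : finType) (E : {set {set V}}) (k : nat)
  (sigma : {set V} -> {set V} -> nat -> nat)
  (L : {set V} -> seq nat) (mu : {set V} -> nat -> R) (l n : R) :
  uniform k E -> linear_hg E -> edge_correspondence E sigma ->
  (forall e, e \in E -> uniq (L e)) ->
  (forall e c, e \in E -> c \in L e -> 0 < mu e c <= 1) ->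
  0 < l -> 0 < n ->
  (forall e, e \in E ->
     [/\ l / n >= 3 * expR 1 * k%:R,
         list_weight L mu e >= l &
         forall v c, v \in e -> c \in L e -> nbhd_weight E L mu sigma e v c <= n]) ->
  exists gamma : {set V} -> nat, Lsigma_colouring E L sigma gamma.
Proof.
move=> Hunif _ Hsig _ Hmu l0 n0 H.
case: (set_0Vmem E) => [E0|[e0 e0E]].
  by exists (fun _ => 0%N); split => e; rewrite E0 inE.
pose mu0 e c := Num.max (mu e c) 0.
have mu0_ge0 : forall e c, 0 <= mu0 e c by move=> e c; rewrite /mu0 le_max lexx orbT.
have mu0E : forall e c, e \in E -> c \in L e -> mu0 e c = mu e c.
  move=> e c eE cL; rewrite /mu0 max_l //; have /andP[h _] := Hmu e c eE cL; exact: ltW.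
have Hlk : 4 * (k%:R * n) <= l.
  have [h1 _ _] := H e0 e0E.
  have e2 : 2 <= expR (1 : R) by have := expR_ge1Dx (1 : R); rewrite (_ : 1 + 1 = 2 :> R) //.
  have k0 : 0 <= k%:R :> R by exact: ler0n.
  have ln : l = l / n * n by rewrite divfK // gt_eqF.
  rewrite [X in _ <= X]ln.
  have h3 : 4 * k%:R <= l / n.
    apply: le_trans h1; rewrite mulrC [X in _ <= X]mulrC; apply: ler_wpM2l => //.
    nra.
  rewrite mulrA; apply: ler_wpM2r => //; exact: ltW.
have Hl : forall x, x \in E -> l <= \sum_(c <- L x) mu0 x c.
  move=> x xE; have [_ h _] := H x xE; apply: le_trans h _.
  rewrite /list_weight le_eqVlt; apply/orP; left; apply/eqP.
  by apply: eq_big_seq => c cL; rewrite mu0E.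
have Hn : forall x v c, x \in E -> v \in x -> c \in L x ->
    \sum_(f in E | (v \in f) && (f != x)) \sum_(c' <- L f | blocks sigma f c' x c) mu0 f c' <= n.
  move=> x v c xE vx cL; have [_ _ h] := H x xE; apply: le_trans (h v c vx cL).
  rewrite /nbhd_weight le_eqVlt; apply/orP; left; apply/eqP.
  apply: eq_bigr => f /andP[fE _].
  rewrite big_seq_cond [RHS]big_seq_cond; apply: eq_bigr => c' /andP[cL' _].
  by rewrite mu0E.
have sEE : {subset enum E <= E} by move=> f; rewrite mem_enum.
have [Cpos _] := main_ind mu0_ge0 Hsig Hl Hn Hunif l0 (ltW n0) Hlk
  (leqnn (size (enum E))) (enum_uniq (mem E)) sEE.
have [g Pg] := sum_pos_ex (AS_prop L (enum E)) Cpos.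
rewrite /W.
case pg: (proper sigma (enum E) g); last by rewrite mulr0 eqxx.
move=> _; exists g; split.
  by move=> e eE; move/allP: Pg => /(_ e); rewrite mem_enum => /(_ eE).
move=> e f eE fE af; move/allP: pg => /(_ e); rewrite mem_enum => /(_ eE) /allP /(_ f).
by rewrite mem_enum => /(_ fE); rewrite af.
Qed.
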